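(* Let $\mathcal{C}$ be a flag code of type $(t_1,\ldots,t_r)$ on $\mathbb{F}_q^n$. Then $\mathcal{C}$ is an optimum distance flag code if and only if $\mathcal{C}$ is disjoint and, for every $i\in\{1,\ldots,r\}$, the projected code $\mathcal{C}_i$ satisfies $d_S(\mathcal{C}_i)=\min\{2t_i,2(n-t_i)\}$.
   Context: $q$ is a prime power, $n>1$. For subspaces $\mathcal{U},\mathcal{V}$ of $\mathbb{F}_q^n$, $d_S(\mathcal{U},\mathcal{V})=\dim(\mathcal{U}+\mathcal{V})-\dim(\mathcal{U}\cap\mathcal{V})$; for a set $\mathcal{D}$ of subspaces, $d_S(\mathcal{D})$ is the minimum of $d_S$ over pairs of distinct elements (and $0$ if $|\mathcal{D}|=1$). A flag of type $(t_1,\ldots,t_r)$, $0<t_1<\cdots<t_r<n$, is a tuple $(\mathcal{F}_1,\ldots,\mathcal{F}_r)$ of nested subspaces $\mathcal{F}_1\subsetneq\cdots\subsetneq\mathcal{F}_r$ of $\mathbb{F}_q^n$ with $\dim\mathcal{F}_i=t_i$. A flag code of that type is a set of at least two such flags; its distance $d_f(\mathcal{C})$ is the minimum over distinct $\mathcal{F},\mathcal{F}'\in\mathcal{C}$ of $\sum_{i=1}^r d_S(\mathcal{F}_i,\mathcal{F}'_i)$. It is an optimum distance flag code if $d_f(\mathcal{C})= 2\left(\sum_{t_i \leq \lfloor n/2\rfloor} t_i + \sum_{t_i > \lfloor n/2\rfloor} (n-t_i)\right)$. The $i$-projected code is $\mathcal{C}_i=\{\mathcal{F}_i : (\mathcal{F}_1,\ldots,\mathcal{F}_r)\in\mathcal{C}\}$.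 The code $\mathcal{C}$ is disjoint if $|\mathcal{C}_1|=\cdots=|\mathcal{C}_r|=|\mathcal{C}|$. *)

(* Defs.v *)
From HB Require Import structures.
From mathcomp Require Import all_boot all_order all_algebra.
Set Implicit Arguments. Unset Strict Implicit. Unset Printing Implicit Defensive.
Import GRing.Theory.
Local Open Scope ring_scope.

Definition subsp (F : finFieldType) (n : nat) := {vspace 'rV[F]_n}.

Definition dS (F : finFieldType) (n : nat) (U V : subsp F n) : nat :=
  (\dim (U + V)%VS - \dim (U :&: V)%VS)%N.

Definition seqmin (s : seq nat) : nat :=
  match s with [::] => 0%N | a :: s' => foldr minn a s' end.

(* minimum of f over ordered pairs of distinct elements of D (0 if none) *)
Definition min_pairs (T : eqType) (D : seq T) (f : T -> T -> nat) : nat :=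
  seqmin [seq f x y | x <- D, y <- [seq y <- D | y != x]].

Definition dS_set (F : finFieldType) (n : nat) (D : seq (subsp F n)) : nat :=
  min_pairs D (@dS F n).

Definition flag (F : finFieldType) (n r : nat) := {ffun 'I_r -> subsp F n}.

Definition is_type (n r : nat) (t : 'I_r -> nat) : Prop :=
  (forall i : 'I_r, (0 < t i < n)%N) /\
  (forall i j : 'I_r, (i < j)%N -> (t i < t j)%N).

Definition is_flag_of_type (F : finFieldType) (n r : nat) (t : 'I_r -> nat)
  (f : flag F n r) : Prop :=
  (forall i : 'I_r, \dim (f i) = t i) /\
  (forall i j : 'I_r, (i < j)%N -> (f i <= f j)%VS /\ f i != f j).

Definition flag_code (F : finFieldType) (n r : nat) (t : 'I_r -> nat)
  (C : seq (flag F n r)) : Prop :=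
  uniq C /\ (2 <= size C)%N /\ (forall f, f \in C -> is_flag_of_type t f).

Definition dflag (F : finFieldType) (n r : nat) (f g : flag F n r) : nat :=
  (\sum_(i < r) dS (f i) (g i))%N.

Definition df_code (F : finFieldType) (n r : nat) (C : seq (flag F n r)) : nat :=
  min_pairs C (@dflag F n r).

Definition optimum_distance (F : finFieldType) (n r : nat) (t : 'I_r -> nat)
  (C : seq (flag F n r)) : Prop :=
  df_code C = (2 * (\sum_(i < r | (t i <= n./2)%N) t i
                   + \sum_(i < r | (n./2 < t i)%N) (n - t i)))%N.

Definition proj_code (F : finFieldType) (n r : nat) (C : seq (flag F n r)) (i : 'I_r)
  : seq (subsp F n) := undup [seq (f : flag F n r) i | f <- C].

Definition disjoint_code (F : finFieldType) (n r : nat) (C : seq (flag F n r)) : Prop :=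
  forall i : 'I_r, size (proj_code C i) = size C.

(* Main.v *)
Require Import Defs.
From mathcomp Require Import all_boot all_order all_algebra.
From mathcomp Require Import zify.

Set Implicit Arguments. Unset Strict Implicit.

Lemma seqmin_le (s : seq nat) x : x \in s -> (seqmin s <= x)%N.
Proof.
case: s => [//|a s] /=.
elim: s x => [|b s IH] x /=; first by rewrite inE => /eqP ->.
rewrite !inE => H; rewrite geq_min.
case/orP: H => [/eqP->|/orP[/eqP ->|H]]; first by rewrite (IH a) ?inE ?eqxx ?orbT.
  by rewrite leqnn.
by rewrite (IH x) ?inE ?H ?orbT.
Qed.

Lemma seqmin_mem (s : seq nat) : s != [::] -> seqmin s \in s.
Proof.
case: s => [//|a s] _ /=.
elim: s => [|b s IH] /=; first by rewrite inE.
rewrite /minn; case: ifP => _; first by rewrite !inE eqxx orbT.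
by move: IH; rewrite !inE => /orP[->|->]; rewrite ?orbT.
Qed.

Lemma min_pairs_le (T : eqType) (D : seq T) f x y :
  x \in D -> y \in D -> y != x -> (min_pairs D f <= f x y)%N.
Proof.
move=> xD yD yx; apply: seqmin_le; apply/allpairsPdep.
by exists x, y; split => //; rewrite mem_filter yx.
Qed.

Lemma min_pairs_mem (T : eqType) (D : seq T) f x y :
  x \in D -> y \in D -> y != x ->
  exists x' y', [/\ x' \in D, y' \in D, y' != x' & min_pairs D f = f x' y'].
Proof.
move=> xD yD yx.
have : min_pairs D f \in [seq f x y | x <- D, y <- [seq y <- D | y != x]].
  apply: seqmin_mem; apply/eqP => E.
  have : f x y \in [seq f x y | x <- D, y <- [seq y <- D | y != x]].
    by apply/allpairsPdep; exists x, y; split => //; rewrite mem_filter yx.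
  by rewrite E.
case/allpairsPdep => x' [y' [H1 H2 ->]]; move: H2; rewrite mem_filter => /andP[H3 H4].
by exists x', y'.
Qed.

Lemma uniq_map_inj (T U : eqType) (h : T -> U) (s : seq T) x y :
  uniq (map h s) -> x \in s -> y \in s -> h x = h y -> x = y.
Proof.
elim: s => [//|a s IH] /= /andP[ha us]; rewrite !inE.
case/orP=> [/eqP->|xs]; case/orP=> [/eqP->|ys] // E.
- by move: ha; rewrite E map_f.
- by move: ha; rewrite -E map_f.
- exact: IH.
Qed.

Section S.
Variables (F : finFieldType) (n : nat).

Lemma dS_le (U V : subsp F n) k : \dim U = k -> \dim V = k ->
  (dS U V <= minn (2 * k) (2 * (n - k)))%N.
Proof.
move=> hU hV; rewrite /dS.
have h := dimv_sum_cap U V.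
have h1 : (\dim (U + V)%VS <= n)%N.
  by have := dimvS (subvf (U + V)%VS); rewrite dimvf /dim /= mul1n.
have h2 := dimvS (capvSl U V).
lia.
Qed.

Lemma dS_refl (U : subsp F n) : dS U U = 0%N.
Proof. by rewrite /dS addvv capvv subnn. Qed.
End S.

Theorem theorem3p11 (F : finFieldType) (n r : nat) (t : 'I_r -> nat)
  (C : seq (flag F n r)) :
  (1 < n)%N -> is_type n t -> flag_code t C ->
  (optimum_distance t C <->
   disjoint_code C /\
   (forall i : 'I_r, dS_set (proj_code C i) = minn (2 * t i) (2 * (n - t i)))).
Proof.
move=> n1 [tpos tinc] [uC [sC fC]].
pose m i := minn (2 * t i) (2 * (n - t i)).
have mpos : forall i, (0 < m i)%N by move=> i; have := tpos i; rewrite /m; lia.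
have HD : (2 * (\sum_(i < r | (t i <= n./2)%N) t i
                   + \sum_(i < r | (n./2 < t i)%N) (n - t i)))%N = \sum_i m i.
  rewrite [RHS](bigID (fun i => (t i <= n./2)%N)) /= mulnDr !big_distrr /=.
  have Hn := odd_double_half n; have Ho := leq_b1 (odd n).
  rewrite -muln2 in Hn.
  congr (_ + _).
    by apply: eq_bigr => i H; have := tpos i; rewrite /m; lia.
  apply: eq_big => [i|i H]; first by rewrite ltnNge.
  by have := tpos i; rewrite /m; lia.
have Hle : forall f g i, f \in C -> g \in C -> (dS (f i) (g i) <= m i)%N.
  move=> f g i /fC [df _] /fC [dg _]; exact: dS_le (df i) (dg i).
have HleD : forall f g, f \in C -> g \in C -> (dflag f g <= \sum_i m i)%N.
  by move=> f g fC' gC'; apply: leq_sum => i _; apply: Hle.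
have [a [b [aC bC ba]]] : exists a b, [/\ a \in C, b \in C & b != a].
  case: C uC sC {fC Hle HleD} => [|a [|b s]] //= /andP[]; rewrite inE negb_or => /andP[ab _] _ _.
  by exists a, b; split; rewrite ?inE ?eqxx ?orbT // eq_sym.
rewrite /optimum_distance HD; split.
- move=> Hopt.
  have Hcomp : forall f g i, f \in C -> g \in C -> g != f -> dS (f i) (g i) = m i.
    move=> f g i fC' gC' gf.
    have h1 : dflag f g = \sum_i m i.
      apply/eqP; rewrite eqn_leq HleD //= -Hopt; exact: min_pairs_le.
    have : (\sum_i (m i - dS (f i) (g i)) == 0)%N.
      rewrite sumnB => [|j _]; last exact: Hle.
      by move: h1; rewrite /dflag => ->; rewrite subnn.
    rewrite sum_nat_eq0 => /forallP /(_ i) /=; rewrite subn_eq0 => H.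
    by apply/eqP; rewrite eqn_leq Hle.
  have Hinj : forall i, {in C &, injective (fun f : flag F n r => f i)}.
    move=> i f g fC' gC' /= E; apply/eqP; rewrite eq_sym; apply/negPn/negP => gf.
    have := Hcomp f g i fC' gC' gf; rewrite E dS_refl => H.
    by have := mpos i; rewrite -H.
  split.
    move=> i; rewrite /proj_code undup_id ?size_map //.
    by rewrite map_inj_in_uniq // => f g; apply: Hinj.
  move=> i; rewrite /dS_set.
  have ai : a i \in proj_code C i by rewrite mem_undup; apply: (map_f (fun f : flag F n r => f i)).
  have bi : b i \in proj_code C i by rewrite mem_undup; apply: (map_f (fun f : flag F n r => f i)).
  have abi : b i != a i.
    by apply/negP => /eqP /(Hinj i b a bC aC) E; move: ba; rewrite E eqxx.
  have [x' [y' [xP yP yx ->]]] := min_pairs_mem (@dS F n) ai bi abi.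
  move: xP yP yx; rewrite !mem_undup => /mapP[f fC' ->] /mapP[g gC' Eg] yx.
  rewrite Eg; apply: Hcomp => //; apply/negP => /eqP gf.
  by move/negP: yx; apply; rewrite Eg gf.
- move=> [Hdisj Hds].
  have Hu : forall i, uniq [seq (f : flag F n r) i | f <- C].
    move=> i; apply/negPn; rewrite -ltn_size_undup.
    by have := Hdisj i; rewrite /proj_code size_map => ->; rewrite ltnn.
  have Hfl : forall f g, f \in C -> g \in C -> g != f -> dflag f g = \sum_i m i.
    move=> f g fC' gC' gf; apply: eq_bigr => i _.
    apply/eqP; rewrite eqn_leq Hle //= /m -Hds /dS_set.
    apply: min_pairs_le.
    - by rewrite mem_undup; apply: (map_f (fun f : flag F n r => f i)).
    - by rewrite mem_undup; apply: (map_f (fun f : flag F n r => f i)).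
    apply/negP => /eqP E; move/negP: gf; apply.
    by rewrite (uniq_map_inj (Hu i) gC' fC' E).
  rewrite /df_code; have [x' [y' [xP yP yx ->]]] := min_pairs_mem (@dflag F n r) aC bC ba.
  exact: Hfl.
Qed.
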